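(* Suppose each $f_i:\mathbb{R}^d\to\mathbb{R}$ is $\mu$-strongly convex and differentiable, with $\mu>0$ and $\lambda>0$. Set $h(x)=\lambda\psi(x)+\frac{\mu}{2n}\|x\|^2$ and $\phi(x)=f(x)-\frac{\mu}{2n}\|x\|^2$ on $\mathbb{R}^{nd}$, and let $L_h=\frac{\lambda+\mu}{n}$ be the smoothness constant of $h$. Then the proximal gradient iteration $$x^{k+1}=\mathrm{prox}_{\frac1{L_h}\phi}\Big(x^k-\tfrac1{L_h}\nabla h(x^k)\Big)$$ satisfies, for every $i$, $$x_i^{k+1}=\mathrm{prox}_{\frac1\lambda f_i}(\bar x^k)=\arg\min_{z\in\mathbb{R}^d}\Big\{f_i(z)+\tfrac\lambda2\|z-\bar x^k\|^2\Big\}.$$ Moreover, this iteration reaches an $\varepsilon$-suboptimal point of $F=h+\phi$ within $\mathcal{O}\big(\frac{\lambda}{\mu}\log\frac1\varepsilon\big)$ iterations.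
   Context: For $x=[x_1,\dots,x_n]\in\mathbb{R}^{nd}$ with $x_i\in\mathbb{R}^d$, define $$f(x)=\frac1n\sum_{i=1}^n f_i(x_i),\qquad \psi(x)=\frac1{2n}\sum_{i=1}^n\|x_i-\bar x\|^2,\qquad \bar x=\frac1n\sum_i x_i,\qquad F=f+\lambda\psi .$$ The proximal operator is $\mathrm{prox}_{\gamma\phi}(v)=\arg\min_x\{\phi(x)+\frac1{2\gamma}\|x-v\|^2\}$. *)

(* Defs.v *)
From HB Require Import structures.
From mathcomp Require Import all_boot all_order all_algebra.
From mathcomp Require Import all_classical all_reals all_analysis.
Set Implicit Arguments. Unset Strict Implicit. Unset Printing Implicit Defensive.
Import Order.TTheory GRing.Theory Num.Theory.
Import numFieldNormedType.Exports.
Local Open Scope classical_set_scope.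
Local Open Scope ring_scope.

Section Defs.
Variable R : realType.

(* Euclidean inner product and squared Euclidean norm on matrices
   (a point of R^d is a row vector 'rV_d = 'M_(1,d); a point
   x = [x_1,...,x_n] of R^{nd} is an n x d matrix whose i-th row is x_i). *)
Definition mxinner (m k : nat) (A B : 'M[R]_(m, k)) : R :=
  \sum_(i < m) \sum_(j < k) A i j * B i j.
Definition sqnorm (m k : nat) (A : 'M[R]_(m, k)) : R := mxinner A A.

(* prox_{gamma phi}(v) = argmin_x { phi x + 1/(2 gamma) ||x - v||^2 }
   (selected with a choice operator; the argmin is a singleton in all
   uses below since the objective is strongly convex). *)
Definition prox (m k : nat) (gamma : R) (phi : 'M[R]_(m, k) -> R)
  (v : 'M[R]_(m, k)) : 'M[R]_(m, k) :=
  xget v [set x | forall y, phi x + (2 * gamma)^-1 * sqnorm (x - v)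
                          <= phi y + (2 * gamma)^-1 * sqnorm (y - v)].

Definition strongly_convex (m k : nat) (mu : R) (g : 'M[R]_(m, k) -> R) :=
  forall (x y : 'M[R]_(m, k)) (t : R), 0 <= t <= 1 ->
    g (t *: x + (1 - t) *: y)
      <= t * g x + (1 - t) * g y - mu / 2 * t * (1 - t) * sqnorm (x - y).

Definition is_gradient (m k : nat) (H : 'M[R]_(m, k) -> R^o)
    (x g : 'M[R]_(m, k)) :=
  differentiable H x /\ forall v, 'd H x v = mxinner g v.

Variables (n d : nat).

Definition xbar (x : 'M[R]_(n, d)) : 'rV[R]_d :=
  n%:R^-1 *: \sum_(i < n) row i x.

Definition fsum (fi : 'I_n -> 'rV[R]_d -> R) (x : 'M[R]_(n, d)) : R :=
  n%:R^-1 * \sum_(i < n) fi i (row i x).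

Definition psi (x : 'M[R]_(n, d)) : R :=
  (2 * n%:R)^-1 * \sum_(i < n) sqnorm (row i x - xbar x).

Definition Fobj (fi : 'I_n -> 'rV[R]_d -> R) (lam : R) (x : 'M[R]_(n, d)) : R :=
  fsum fi x + lam * psi x.

Definition hfun (mu lam : R) (x : 'M[R]_(n, d)) : R :=
  lam * psi x + mu / (2 * n%:R) * sqnorm x.

Definition phifun (fi : 'I_n -> 'rV[R]_d -> R) (mu : R) (x : 'M[R]_(n, d)) : R :=
  fsum fi x - mu / (2 * n%:R) * sqnorm x.

Definition Lh (mu lam : R) : R := (lam + mu) / n%:R.

Fixpoint pg_iter (fi : 'I_n -> 'rV[R]_d -> R) (mu lam : R)
    (gradh : 'M[R]_(n, d) -> 'M[R]_(n, d)) (x0 : 'M[R]_(n, d)) (k : nat)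
    : 'M[R]_(n, d) :=
  match k with
  | 0 => x0
  | k'.+1 =>
      let xk := pg_iter fi mu lam gradh x0 k' in
      prox (Lh mu lam)^-1 (phifun fi mu) (xk - (Lh mu lam)^-1 *: gradh xk)
  end.

Definition standing_assumptions (fi : 'I_n -> 'rV[R]_d -> R) (mu lam : R)
    (gradh : 'M[R]_(n, d) -> 'M[R]_(n, d)) : Prop :=
  [/\ (0 < n)%N, 0 < mu, 0 < lam,
      (forall i, strongly_convex mu (fi i)) &
      (forall i z, differentiable (fi i : 'rV[R]_d -> R^o) z)]
  /\ (forall x, is_gradient (hfun mu lam : _ -> R^o) x (gradh x)).

End Defs.

(* Main.v *)
Require Import Defs.
From HB Require Import structures.
From mathcomp Require Import all_boot all_order all_algebra.
From mathcomp Require Import all_classical all_reals all_analysis.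
From mathcomp Require Import ring lra.
Set Implicit Arguments. Unset Strict Implicit. Unset Printing Implicit Defensive.
Import Order.TTheory GRing.Theory Num.Theory.
Import numFieldNormedType.Exports.
Local Open Scope classical_set_scope.
Local Open Scope ring_scope.

Section Basic.
Variable R : realType.

Lemma mxinnerC m k (A B : 'M[R]_(m, k)) : mxinner A B = mxinner B A.
Proof. by apply: eq_bigr => i _; apply: eq_bigr => j _; rewrite mulrC. Qed.

Lemma mxinnerDl m k (A B C : 'M[R]_(m, k)) :
  mxinner (A + B) C = mxinner A C + mxinner B C.
Proof.
rewrite /mxinner -big_split; apply: eq_bigr => i _.
by rewrite -big_split; apply: eq_bigr => j _; rewrite mxE mulrDl.
Qed.

Lemma mxinnerZl m k a (A B : 'M[R]_(m, k)) :
  mxinner (a *: A) B = a * mxinner A B.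
Proof.
rewrite /mxinner mulr_sumr; apply: eq_bigr => i _.
by rewrite mulr_sumr; apply: eq_bigr => j _; rewrite mxE mulrA.
Qed.

Lemma mxinnerNl m k (A B : 'M[R]_(m, k)) : mxinner (- A) B = - mxinner A B.
Proof. by rewrite -scaleN1r mxinnerZl mulN1r. Qed.

Lemma mxinnerBl m k (A B C : 'M[R]_(m, k)) :
  mxinner (A - B) C = mxinner A C - mxinner B C.
Proof. by rewrite mxinnerDl mxinnerNl. Qed.

Lemma mxinnerDr m k (A B C : 'M[R]_(m, k)) :
  mxinner C (A + B) = mxinner C A + mxinner C B.
Proof. by rewrite mxinnerC mxinnerDl !(mxinnerC C). Qed.

Lemma mxinnerZr m k a (A B : 'M[R]_(m, k)) :
  mxinner B (a *: A) = a * mxinner B A.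
Proof. by rewrite mxinnerC mxinnerZl mxinnerC. Qed.

Lemma mxinnerBr m k (A B C : 'M[R]_(m, k)) :
  mxinner C (A - B) = mxinner C A - mxinner C B.
Proof. by rewrite mxinnerC mxinnerBl !(mxinnerC C). Qed.

Lemma mxinner0l m k (A : 'M[R]_(m, k)) : mxinner 0 A = 0.
Proof. by rewrite -(scale0r (0 : 'M[R]_(m,k))) mxinnerZl mul0r. Qed.

Lemma mxinner_suml m k (I : finType) (F : I -> 'M[R]_(m, k)) B :
  mxinner (\sum_i F i) B = \sum_i mxinner (F i) B.
Proof.
elim/big_rec2: _ => [|i x y _ <-]; first exact: mxinner0l.
by rewrite mxinnerDl.
Qed.

Lemma sqnorm_ge0 m k (A : 'M[R]_(m, k)) : 0 <= sqnorm A.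
Proof. by apply: sumr_ge0 => i _; apply: sumr_ge0 => j _; rewrite -expr2 sqr_ge0. Qed.

Lemma sqnorm_eq0 m k (A : 'M[R]_(m, k)) : sqnorm A = 0 -> A = 0.
Proof.
move=> /eqP; rewrite psumr_eq0; last by move=> i _; apply: sumr_ge0 => j _; rewrite -expr2 sqr_ge0.
move=> /allP H; apply/matrixP => i j; rewrite mxE.
have /implyP/(_ isT) := H i (mem_index_enum _).
rewrite psumr_eq0; last by move=> l _; rewrite -expr2 sqr_ge0.
move=> /allP /(_ j (mem_index_enum _)) /implyP /(_ isT).
by rewrite mulf_eq0 orbb => /eqP.
Qed.

Lemma sqnormD m k (A B : 'M[R]_(m, k)) :
  sqnorm (A + B) = sqnorm A + 2 * mxinner A B + sqnorm B.
Proof.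
rewrite /sqnorm mxinnerDl !mxinnerDr (mxinnerC B A); ring.
Qed.

Lemma sqnormZ m k a (A : 'M[R]_(m, k)) : sqnorm (a *: A) = a ^+ 2 * sqnorm A.
Proof. by rewrite /sqnorm mxinnerZl mxinnerZr mulrA expr2. Qed.

Lemma sqnormN m k (A : 'M[R]_(m, k)) : sqnorm (- A) = sqnorm A.
Proof. by rewrite -scaleN1r sqnormZ sqrrN expr1n mul1r. Qed.

Lemma sqnorm_convex m k t (x y : 'M[R]_(m, k)) :
  sqnorm (t *: x + (1 - t) *: y) =
  t * sqnorm x + (1 - t) * sqnorm y - t * (1 - t) * sqnorm (x - y).
Proof.
have -> : t *: x + (1 - t) *: y = y + t *: (x - y).
  by apply/matrixP => a b; rewrite !mxE; ring.
have -> : sqnorm x = sqnorm (y + (x - y)) by rewrite addrC subrK.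
move: (x - y) => w.
rewrite !sqnormD sqnormZ mxinnerZr; ring.
Qed.

Lemma mx_norm_sq m k (A : 'M[R]_(m, k)) : `|A| ^+ 2 <= sqnorm A.
Proof.
have [A0|] := eqVneq `|A| 0.
  by rewrite A0 expr0n /= sqnorm_ge0.
have -> : `|A| = mx_norm A by [].
move=> /mx_norm_neq0 [[i j] ->] /=.
rewrite real_normK ?num_real // /sqnorm /mxinner.
rewrite (bigD1 i) //= (bigD1 j) //= -expr2 -addrA lerDl.
apply: addr_ge0; first by apply: sumr_ge0 => l _; rewrite -expr2 sqr_ge0.
by apply: sumr_ge0 => l _; apply: sumr_ge0 => l' _; rewrite -expr2 sqr_ge0.
Qed.

End Basic.

Section Exist.
Variable R : realType.

Lemma coercive k (m : R) (g : 'rV[R]_k -> R) : 0 < m -> continuous g ->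
  strongly_convex m g -> exists2 r, 0 < r & forall y, r < `|y| -> g 0 < g y.
Proof.
move=> m0 cg scg.
have : \forall y \near (0 : 'rV[R]_k), g 0 - 1 < g y.
  by apply: (cvgr_gt (g 0) (cg 0)); rewrite ltrBlDr ltrDl.
move=> /nbhs_norm0P [/= del del0 Hdel].
set rho := del / 2.
have rho0 : 0 < rho by rewrite divr_gt0.
exists (del + 4 / (m * rho)); first by rewrite addr_gt0 // divr_gt0 // mulr_gt0.
move=> y Hy.
set N := `|y|.
have H4 : 0 < 4 / (m * rho) by rewrite divr_gt0 // mulr_gt0.
have Nd : del < N by apply: lt_trans Hy; rewrite ltrDl.
have N4 : 4 / (m * rho) < N by apply: lt_trans Hy; rewrite ltrDr.
have N0 : 0 < N by apply: lt_trans Nd.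
set s := rho / N.
have s0 : 0 < s by rewrite divr_gt0.
have sN : s * N = rho by rewrite /s divfK // gt_eqF.
have s12 : s <= 1 / 2.
  rewrite /s ler_pdivrMr // /rho; lra.
have Hsy : g 0 - 1 < g (s *: y).
  apply: Hdel => /=; rewrite normrZ gtr0_norm // sN /rho.
  by rewrite ltr_pdivrMr // ltr_pMr // ltr1n.
have := scg y 0 s; rewrite subr0 scaler0 addr0.
have -> : (0 <= s <= 1) = true by apply/andP; split; [exact: ltW | apply: (le_trans s12); lra].
move=> /(_ isT) Hc.
have sq := mx_norm_sq y; rewrite -/N in sq.
have key : m / 2 * s * (1 - s) * N ^+ 2 <= m / 2 * s * (1 - s) * sqnorm y.
  have h1s : 0 <= 1 - s by lra.
  apply: ler_wpM2l => //; apply/mulr_ge0 => //; apply/mulr_ge0; last exact/ltW.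
  by apply/divr_ge0 => //; exact/ltW.
have mN : 4 <= m * rho * N.
  by move: N4; rewrite ltr_pdivrMr ?mulr_gt0 // mulrC => /ltW.
have : 1 <= m / 2 * s * (1 - s) * N ^+ 2.
  apply: (le_trans (y := m / 4 * (s * N) * N)).
    rewrite sN -(mulrA _ rho); apply: (le_trans (y := 1/4 * (m * rho * N))); last by rewrite !mulrA; lra.
    lra.
  have : m / 4 * (s * N) * N = m / 2 * s * (1/2) * N ^+ 2 by rewrite expr2; field.
  move=> ->; rewrite ler_wpM2r ?sqr_ge0 // ler_wpM2l //; first by rewrite mulr_ge0 // divr_ge0 // ltW.
  lra.
move=> H1.
have : s * g 0 < s * g y by nra.
by rewrite ltr_pM2l.
Qed.

Lemma strongly_convex_min k (m : R) (g : 'rV[R]_k -> R) : 0 < m ->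
  continuous g -> strongly_convex m g -> exists w, forall y, g w <= g y.
Proof.
move=> m0 cg scg.
have [r r0 Hr] := coercive m0 cg scg.
set A := closed_ball (0 : 'rV[R]_k) r.
have cA : compact A.
  apply: bounded_closed_compact; last exact: closed_ball_closed.
  rewrite /A closed_ballE //; rewrite /= /bounded_near.
  near=> M => y /= Hy; move: Hy; rewrite /closed_ball_ /= => Hy.
  have : `|y| <= r by move: Hy; rewrite distrC subr0.
  move=> Hy2; apply: (le_trans Hy2).
  by near: M; apply: nbhs_pinfty_ge; exact: num_real.
have A0 : A !=set0 by exists 0; exact: closed_ballxx.
have [c cA' Hc] := compact_EVT_min A0 cA (continuous_subspaceT cg).
exists c => y.
have g0 : g c <= g 0 by apply: Hc; rewrite inE; exact: closed_ballxx.
have [yr|yr] := leP `|y| r.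
  by apply: Hc; rewrite inE /A closed_ballE // /closed_ball_ /= distrC subr0.
by apply: (le_trans g0); apply/ltW/Hr.
Unshelve. all: by end_near.
Qed.

End Exist.

Section Struct.
Variable R : realType.

Lemma mxinner_rows m k (A B : 'M[R]_(m, k)) :
  mxinner A B = \sum_i mxinner (row i A) (row i B).
Proof.
rewrite /mxinner; apply: eq_bigr => i _; rewrite big_ord1.
by apply: eq_bigr => j _; rewrite !mxE.
Qed.

Lemma sqnorm_rows m k (A : 'M[R]_(m, k)) :
  sqnorm A = \sum_i sqnorm (row i A).
Proof. exact: mxinner_rows. Qed.

Lemma rowDm m k i (A B : 'M[R]_(m, k)) : row i (A + B) = row i A + row i B.
Proof. by apply/matrixP => a b; rewrite !mxE. Qed.
Lemma rowZm m k i a (A : 'M[R]_(m, k)) : row i (a *: A) = a *: row i A.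
Proof. by apply/matrixP => a' b; rewrite !mxE. Qed.
Lemma rowNm m k i (A : 'M[R]_(m, k)) : row i (- A) = - row i A.
Proof. by apply/matrixP => a b; rewrite !mxE. Qed.
Lemma rowBm m k i (A B : 'M[R]_(m, k)) : row i (A - B) = row i A - row i B.
Proof. by rewrite rowDm rowNm. Qed.

Variables n d : nat.
Implicit Types x y w : 'M[R]_(n, d).

Lemma xbarE x a j : xbar x a j = n%:R^-1 * \sum_i x i j.
Proof.
rewrite /xbar !mxE summxE; congr (_ * _); apply: eq_bigr => i _; by rewrite !mxE.
Qed.

Lemma xbarD x y : xbar (x + y) = xbar x + xbar y.
Proof.
apply/matrixP => a j; rewrite [in RHS]mxE !xbarE -mulrDr -big_split /=.
by congr (_ * _); apply: eq_bigr => i _; rewrite mxE.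
Qed.

Lemma xbarZ c x : xbar (c *: x) = c *: xbar x.
Proof.
apply/matrixP => a j; rewrite [in RHS]mxE !xbarE mulrCA.
by congr (_ * _); rewrite mulr_sumr; apply: eq_bigr => i _; rewrite mxE.
Qed.

Lemma xbarN x : xbar (- x) = - xbar x.
Proof. by rewrite -scaleN1r xbarZ scaleN1r. Qed.

Lemma xbarB x y : xbar (x - y) = xbar x - xbar y.
Proof. by rewrite xbarD xbarN. Qed.

Lemma sum_rows_xbar x : (0 < n)%N -> \sum_i row i x = n%:R *: xbar x.
Proof.
move=> n0; rewrite /xbar scalerA mulfV ?scale1r //.
by rewrite pnatr_eq0 -lt0n.
Qed.

Lemma sum_ei x : (0 < n)%N -> \sum_i (row i x - xbar x) = 0.
Proof.
move=> n0; rewrite sumrB sum_rows_xbar // sumr_const card_ord scaler_nat.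
by rewrite subrr.
Qed.

Lemma psiD x w : (0 < n)%N ->
  psi (x + w) = psi x + n%:R^-1 * \sum_i mxinner (row i x - xbar x) (row i w)
                + psi w.
Proof.
move=> n0.
have E : forall i, row i (x + w) - xbar (x + w)
                   = (row i x - xbar x) + (row i w - xbar w).
  by move=> i; rewrite rowDm xbarD; apply/matrixP => a b; rewrite !mxE; ring.
have S : \sum_i mxinner (row i x - xbar x) (row i w - xbar w)
         = \sum_i mxinner (row i x - xbar x) (row i w).
  under eq_bigr do rewrite mxinnerBr.
  rewrite sumrB -mxinner_suml sum_ei // mxinner0l subr0 //.
rewrite /psi.
under eq_bigr do rewrite E sqnormD.
rewrite big_split big_split /= -mulr_sumr S.
have n0' : n%:R != 0 :> R by rewrite pnatr_eq0 -lt0n.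
field; exact: n0'.
Qed.

Lemma psi_ge0 x : (0 < n)%N -> 0 <= psi x.
Proof.
move=> n0; rewrite /psi; apply: mulr_ge0; first by rewrite invr_ge0 mulr_ge0 // ler0n.
by apply: sumr_ge0 => i _; exact: sqnorm_ge0.
Qed.

Lemma psi_le x : (0 < n)%N -> psi x <= (2 * n%:R)^-1 * sqnorm x.
Proof.
move=> n0; rewrite /psi; apply: ler_wpM2l; first by rewrite invr_ge0 mulr_ge0 // ler0n.
rewrite sqnorm_rows.
under eq_bigr do rewrite sqnormD mxinnerC mxinnerNl sqnormN mxinnerC.
rewrite !big_split /= -mulr_sumr sumrN -mxinner_suml sum_rows_xbar // mxinnerZl.
rewrite sumr_const card_ord -mulr_natl -/(sqnorm (xbar x)).
have := sqnorm_ge0 (xbar x); have : (0 : R) <= n%:R by rewrite ler0n.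
nra.
Qed.

Lemma psi_convex t x y : (0 < n)%N ->
  psi (t *: x + (1 - t) *: y) = t * psi x + (1 - t) * psi y - t * (1 - t) * psi (x - y).
Proof.
move=> n0.
have E : forall i, row i (t *: x + (1 - t) *: y) - xbar (t *: x + (1 - t) *: y)
          = t *: (row i x - xbar x) + (1 - t) *: (row i y - xbar y).
  by move=> i; rewrite rowDm !rowZm xbarD !xbarZ; apply/matrixP => a b; rewrite !mxE; ring.
have E2 : forall i, row i (x - y) - xbar (x - y)
          = (row i x - xbar x) - (row i y - xbar y).
  by move=> i; rewrite rowBm xbarB; apply/matrixP => a b; rewrite !mxE; ring.
rewrite /psi.
under eq_bigr do rewrite E sqnorm_convex.
under [X in _ = _ - _ * (_ * X)]eq_bigr do rewrite E2.
rewrite !sumrB big_split /= -!mulr_sumr; ring.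
Qed.

End Struct.

Section Grad.
Variable R : realType.
Variables n d : nat.
Implicit Types x y w v : 'M[R]_(n, d).

Definition Emat x : 'M[R]_(n, d) := \matrix_(i, j) (row i x - xbar x) 0 j.
Definition Gm (mu lam : R) x := (lam / n%:R) *: Emat x + (mu / n%:R) *: x.

Lemma row_Emat x i : row i (Emat x) = row i x - xbar x.
Proof. by apply/matrixP => a b; rewrite !mxE (ord1 a). Qed.

Lemma mxinner_Emat x w :
  mxinner (Emat x) w = \sum_i mxinner (row i x - xbar x) (row i w).
Proof. by rewrite mxinner_rows; apply: eq_bigr => i _; rewrite row_Emat. Qed.

Lemma psiZ c x : psi (c *: x) = c ^+ 2 * psi x.
Proof.
rewrite /psi mulrCA; congr (_ * _); rewrite mulr_sumr; apply: eq_bigr => i _.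
by rewrite rowZm xbarZ -scalerBr sqnormZ.
Qed.

Lemma hZ mu lam c x : hfun mu lam (c *: x) = c ^+ 2 * hfun mu lam x.
Proof. by rewrite /hfun psiZ sqnormZ; ring. Qed.

Lemma hD mu lam x w : (0 < n)%N ->
  hfun mu lam (x + w) = hfun mu lam x + mxinner (Gm mu lam x) w + hfun mu lam w.
Proof.
move=> n0; rewrite /hfun psiD // sqnormD /Gm mxinnerDl !mxinnerZl mxinner_Emat.
have n0' : n%:R != 0 :> R by rewrite pnatr_eq0 -lt0n.
by field.
Qed.

Lemma grad_unique mu lam x g : (0 < n)%N ->
  is_gradient (hfun mu lam : 'M[R]_(n, d) -> R^o) x g -> g = Gm mu lam x.
Proof.
move=> n0 [dh Hd].
suff H : forall v, mxinner (g - Gm mu lam x) v = 0.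
  by apply/eqP; rewrite -subr_eq0; apply/eqP/sqnorm_eq0; exact: H.
move=> v; rewrite mxinnerBl -Hd -deriveE //.
apply/eqP; rewrite subr_eq0; apply/eqP.
apply: cvg_lim => //.
set c := mxinner (Gm mu lam x) v; set b := hfun mu lam v.
have E : {near 0^', (fun h : R => c + h * b) =1
   (fun h : R => h^-1 *: ((hfun mu lam \o shift x) (h *: v) - hfun mu lam x))}.
  near=> h; have hn0 : h != 0 by near: h; exact: nbhs_dnbhs_neq.
  rewrite /= /shift (addrC (h *: v) x) hD // hZ mxinnerZr -/c -/b.
  change (c + h * b = h^-1 * (hfun mu lam x + h * c + h ^+ 2 * b - hfun mu lam x)).
  by field.
apply: (@cvg_trans _ ((fun h : R => c + h * b) @ 0^')); first exact: (near_eq_cvg E).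
apply: (@cvg_trans _ ((fun h : R => c + h * b) @ (0 : R))).
  exact: cvg_app (@nbhs_dnbhs _ 0).
suff : (fun h : R => c + h * b) @ (0 : R) --> c + 0 * b by rewrite mul0r addr0.
apply: cvgD; first exact: cvg_cst.
by apply: cvgM; [exact: cvg_id | exact: cvg_cst].
Unshelve. all: by end_near.
Qed.

End Grad.

Section ProxSec.
Variable R : realType.

Lemma cont_sum (T : topologicalType) (I : finType) (F : I -> T -> R) :
  (forall i, continuous (F i)) -> continuous (fun x => \sum_i F i x).
Proof.
move=> H.
suff S : forall s, continuous (fun x => \sum_(i <- s) F i x) by exact: S.
elim=> [|j s IH].
  have -> : (fun x => \sum_(i <- [::]) F i x) = fun=> 0.
    by apply/funext => y; rewrite big_nil.
  exact: cst_continuous.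
have -> : (fun x => \sum_(i <- j :: s) F i x) = (fun x => F j x + \sum_(i <- s) F i x).
  by apply/funext => y; rewrite big_cons.
move=> x; apply: continuousD; [exact: H | exact: IH].
Qed.

Lemma sqnormB_cont m k (a : 'M[R]_(m, k)) : continuous (fun w : 'M[R]_(m, k) => sqnorm (w - a)).
Proof.
rewrite /sqnorm /mxinner.
apply: cont_sum => i.
apply: cont_sum => j.
move=> w; apply: continuousM.
  apply: (@continuous_comp _ _ _ (fun w : 'M[R]_(m,k) => w - a) (fun M => M i j)).
    by apply: continuousB => //; exact: cst_continuous.
  exact: coord_continuous.
apply: (@continuous_comp _ _ _ (fun w : 'M[R]_(m,k) => w - a) (fun M => M i j)).
  by apply: continuousB => //; exact: cst_continuous.
exact: coord_continuous.
Qed.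

Definition gobj d (fi : 'rV[R]_d -> R) (lam : R) (a w : 'rV[R]_d) :=
  fi w + (2 * lam^-1)^-1 * sqnorm (w - a).

Lemma gobj_sc d (fi : 'rV[R]_d -> R) mu lam a : strongly_convex mu fi -> 0 < lam ->
  strongly_convex mu (gobj fi lam a).
Proof.
move=> sc l0 x y t /andP[t0 t1]; rewrite /gobj.
have E : t *: x + (1 - t) *: y - a = t *: (x - a) + (1 - t) *: (y - a).
  by apply/matrixP => p q; rewrite !mxE; ring.
have E2 : x - a - (y - a) = x - y by apply/matrixP => p q; rewrite !mxE; ring.
rewrite E sqnorm_convex E2.
have := sc x y t; rewrite t0 t1 => /(_ isT) Hf.
have K0 : 0 <= (2 * lam^-1)^-1 by rewrite invr_ge0 mulr_ge0 // invr_ge0 ltW.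
have P0 : 0 <= t * (1 - t) * sqnorm (x - y).
  by rewrite mulr_ge0 ?sqnorm_ge0 // mulr_ge0 // subr_ge0.
have := sqnorm_ge0 (x - a); have := sqnorm_ge0 (y - a).
set K := (2 * lam^-1)^-1 in K0 *; nra.
Qed.

Lemma gobj_cont d (fi : 'rV[R]_d -> R) lam a :
  (forall z, differentiable (fi : 'rV[R]_d -> R^o) z) -> continuous (gobj fi lam a).
Proof.
move=> df z.
have -> : gobj fi lam a = (fi : _ -> R^o) +
   ((fun=> (2 * lam^-1)^-1) \* (fun w => sqnorm (w - a))) by apply/funext.
apply: continuousD; first exact: differentiable_continuous.
apply: continuousM; first exact: cst_continuous.
exact: sqnormB_cont.
Qed.

Lemma sc_unique k (g : 'rV[R]_k -> R) m : 0 < m -> strongly_convex m g ->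
  forall w w', (forall u, g w <= g u) -> (forall u, g w' <= g u) -> w' = w.
Proof.
move=> m0 sc w w' Hw Hw'.
have := sc w w' (1/2); rewrite (_ : (0 <= 1/2 <= 1) = true); last by apply/andP; split; lra.
move=> /(_ isT) H.
have h1 := Hw (1/2 *: w + (1 - 1/2) *: w').
have h2 := Hw' w.
have h3 := Hw w'.
have s0 := sqnorm_ge0 (w - w').
have : sqnorm (w - w') <= 0 by nra.
move=> s1; have : sqnorm (w - w') = 0 by apply/eqP; rewrite eq_le s1 s0.
by move/sqnorm_eq0/eqP; rewrite subr_eq0 => /eqP.
Qed.

Lemma rows_of_min n d (G : 'I_n -> 'rV[R]_d -> R) (z : 'M[R]_(n, d)) :
  (forall y : 'M[R]_(n, d), \sum_i G i (row i z) <= \sum_i G i (row i y)) ->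
  forall i u, G i (row i z) <= G i u.
Proof.
move=> H i u.
pose y : 'M[R]_(n, d) := \matrix_(p, q) (if p == i then u ord0 q else z p q).
have ri : row i y = u.
  by apply/matrixP => a b; rewrite !mxE eqxx; congr (u _ b); apply: val_inj; case: a => -[].
have rj : forall j, j != i -> row j y = row j z.
  by move=> j /negbTE ji; apply/matrixP => a b; rewrite !mxE ji; congr (z j _); apply: val_inj; case: a => -[].
have := H y; rewrite (bigD1 i) //= [X in _ <= X](bigD1 i) //= ri.
under [X in _ <= _ + X]eq_bigr => j ji do rewrite rj //.
by rewrite lerD2r.
Qed.

Lemma min_of_rows n d (G : 'I_n -> 'rV[R]_d -> R) (w : 'I_n -> 'rV[R]_d) :
  (forall i u, G i (w i) <= G i u) ->
  forall y : 'M[R]_(n, d),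
    \sum_i G i (row i (\matrix_(p, q) w p ord0 q)) <= \sum_i G i (row i y).
Proof.
move=> H y; apply: ler_sum => i _.
have -> : row i (\matrix_(p, q) w p ord0 q) = w i.
  by apply/matrixP => a b; rewrite !mxE; congr (w i _ b); apply: val_inj; case: a => -[].
exact: H.
Qed.

End ProxSec.

Section Step.
Variable R : realType.

Lemma sqnormB_scale d (r a : 'rV[R]_d) c :
  sqnorm (r - c *: a) = sqnorm r - 2 * c * mxinner r a + c ^+ 2 * sqnorm a.
Proof.
rewrite sqnormD mxinnerC mxinnerNl mxinnerZl sqnormN sqnormZ mxinnerC; ring.
Qed.

Lemma rowv n d (mu lam : R) (x : 'M[R]_(n, d)) i : (0 < n)%N -> 0 < lam -> 0 < mu ->
  row i (x - (Lh n mu lam)^-1 *: Gm mu lam x) = (lam / (lam + mu)) *: xbar x.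
Proof.
move=> n0 l0 m0.
have n0' : n%:R != 0 :> R by rewrite pnatr_eq0 -lt0n.
have lm : lam + mu != 0 by rewrite gt_eqF // addr_gt0.
apply/matrixP => a j; rewrite /Gm /Lh /Emat !mxE !summxE.
under eq_bigr do rewrite !mxE.
have E : \sum_k row k x a j = \sum_k x k j by apply: eq_bigr => k _; rewrite mxE.
rewrite E.
set S := \sum_(i0 < n) _.
field; by rewrite n0' lm.
Qed.

Lemma sep n d (f : 'I_n -> 'rV[R]_d -> R) (mu lam : R) (x z : 'M[R]_(n, d)) :
  (0 < n)%N -> 0 < lam -> 0 < mu ->
  phifun f mu z + (2 * (Lh n mu lam)^-1)^-1 * sqnorm (z - (x - (Lh n mu lam)^-1 *: Gm mu lam x))
  = n%:R^-1 * \sum_i (gobj (f i) lam (xbar x) (row i z)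
        + ((lam + mu) / 2 * (lam / (lam + mu)) ^+ 2 - lam / 2) * sqnorm (xbar x)).
Proof.
move=> n0 l0 m0.
have n0' : n%:R != 0 :> R by rewrite pnatr_eq0 -lt0n.
have lm : lam + mu != 0 by rewrite gt_eqF // addr_gt0.
have l0' : lam != 0 by rewrite gt_eqF.
move: (sqnormB_scale) => SB.
have E1 : forall r, sqnorm (r - xbar x) = sqnorm r - 2 * mxinner r (xbar x) + sqnorm (xbar x).
  by move=> r; rewrite -{1}(scale1r (xbar x)) SB; ring.
set q := sqnorm (xbar x).
have qE : sqnorm (xbar x) = q by [].
clearbody q.
rewrite /phifun /fsum (sqnorm_rows z) (sqnorm_rows (z - _)).
rewrite [X in _ + _ * X = _](eq_bigr (fun i => sqnorm (row i z - (lam / (lam + mu)) *: xbar x))); last first.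
  by move=> i _; rewrite rowBm rowv.
rewrite !mulr_sumr -sumrN -!big_split /=.
apply: eq_bigr => i _.
rewrite /gobj SB E1 /Lh qE.
field; by rewrite n0' lm l0'.
Qed.

Lemma step n d (f : 'I_n -> 'rV[R]_d -> R) (mu lam : R) (x : 'M[R]_(n, d)) :
  (0 < n)%N -> 0 < mu -> 0 < lam ->
  (forall i, strongly_convex mu (f i)) ->
  (forall i z, differentiable (f i : 'rV[R]_d -> R^o) z) ->
  let v := x - (Lh n mu lam)^-1 *: Gm mu lam x in
  (forall y, phifun f mu (prox (Lh n mu lam)^-1 (phifun f mu) v)
      + (2 * (Lh n mu lam)^-1)^-1 * sqnorm (prox (Lh n mu lam)^-1 (phifun f mu) v - v)
     <= phifun f mu y + (2 * (Lh n mu lam)^-1)^-1 * sqnorm (y - v))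
  /\ forall i, row i (prox (Lh n mu lam)^-1 (phifun f mu) v) = prox lam^-1 (f i) (xbar x).
Proof.
move=> n0 m0 l0 sc df v.
set a := xbar x.
set K0 := ((lam + mu) / 2 * (lam / (lam + mu)) ^+ 2 - lam / 2) * sqnorm a.
pose G i w := gobj (f i) lam a w + K0.
have Mdef : forall z, phifun f mu z + (2 * (Lh n mu lam)^-1)^-1 * sqnorm (z - v)
                      = n%:R^-1 * \sum_i G i (row i z).
  by move=> z; rewrite /v sep.
have ninv : 0 < n%:R^-1 :> R by rewrite invr_gt0 ltr0n.
have wex : forall i, exists w, forall u, gobj (f i) lam a w <= gobj (f i) lam a u.
  move=> i; apply: (strongly_convex_min m0).
    exact: gobj_cont.
  exact: gobj_sc.
pose w i := xget 0 [set w | forall u, gobj (f i) lam a w <= gobj (f i) lam a u].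
have wP : forall i u, G i (w i) <= G i u.
  move=> i u; rewrite lerD2r.
  by have := xgetPex 0 (wex i); apply.
pose Z : 'M[R]_(n, d) := \matrix_(p, q) w p ord0 q.
have PZ : forall y, phifun f mu Z + (2 * (Lh n mu lam)^-1)^-1 * sqnorm (Z - v)
     <= phifun f mu y + (2 * (Lh n mu lam)^-1)^-1 * sqnorm (y - v).
  move=> y; rewrite !Mdef ler_pM2l //.
  exact: min_of_rows.
have Pp : forall y, phifun f mu (prox (Lh n mu lam)^-1 (phifun f mu) v)
      + (2 * (Lh n mu lam)^-1)^-1 * sqnorm (prox (Lh n mu lam)^-1 (phifun f mu) v - v)
     <= phifun f mu y + (2 * (Lh n mu lam)^-1)^-1 * sqnorm (y - v).
  exact: (@xgetPex _ v [set z | forall y, phifun f mu z + (2 * (Lh n mu lam)^-1)^-1 * sqnorm (z - v)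
     <= phifun f mu y + (2 * (Lh n mu lam)^-1)^-1 * sqnorm (y - v)] (ex_intro _ Z PZ)).
split => // i.
have rows := rows_of_min (G := G) (z := prox (Lh n mu lam)^-1 (phifun f mu) v).
have : forall u, gobj (f i) lam a (row i (prox (Lh n mu lam)^-1 (phifun f mu) v))
                 <= gobj (f i) lam a u.
  move=> u; rewrite -(lerD2r K0); apply: rows => y.
  by have := Pp y; rewrite !Mdef ler_pM2l.
move=> Hrow.
rewrite [RHS]/prox.
symmetry; apply: xget_unique => //= u Hu.
exact: (sc_unique m0 (gobj_sc a (sc i) l0) Hrow Hu).
Qed.

End Step.

Section Rate.
Variable R : realType.

Lemma Fobj_split n d (f : 'I_n -> 'rV[R]_d -> R) (mu lam : R) z :
  Fobj f lam z = phifun f mu z + hfun mu lam z.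
Proof. rewrite /Fobj /phifun /hfun; ring. Qed.

Lemma F_sc n d (f : 'I_n -> 'rV[R]_d -> R) (mu lam : R) (x y : 'M[R]_(n, d)) t :
  (0 < n)%N -> 0 < lam -> (forall i, strongly_convex mu (f i)) -> 0 <= t <= 1 ->
  Fobj f lam (t *: x + (1 - t) *: y) <=
  t * Fobj f lam x + (1 - t) * Fobj f lam y - mu / (2 * n%:R) * t * (1 - t) * sqnorm (x - y).
Proof.
move=> n0 l0 sc /andP[t0 t1].
have n0' : n%:R != 0 :> R by rewrite pnatr_eq0 -lt0n.
have ninv : 0 <= n%:R^-1 :> R by rewrite invr_ge0 ler0n.
have Hf : fsum f (t *: x + (1 - t) *: y) <=
   t * fsum f x + (1 - t) * fsum f y - mu / (2 * n%:R) * t * (1 - t) * sqnorm (x - y).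
  have SR : sqnorm (x - y) = \sum_i sqnorm (row i x - row i y).
    by rewrite sqnorm_rows; apply: eq_bigr => i _; rewrite rowBm.
  rewrite /fsum SR.
  have -> : t * (n%:R^-1 * \sum_i f i (row i x)) + (1 - t) * (n%:R^-1 * \sum_i f i (row i y))
      - mu / (2 * n%:R) * t * (1 - t) * \sum_i sqnorm (row i x - row i y)
      = n%:R^-1 * \sum_i (t * f i (row i x) + (1 - t) * f i (row i y)
                        - mu / 2 * t * (1 - t) * sqnorm (row i x - row i y)).
    rewrite sumrB big_split /= -!mulr_sumr.
    by field.
  apply: ler_wpM2l => //; apply: ler_sum => i _.
  rewrite rowDm !rowZm.
  by have := sc i (row i x) (row i y) t; rewrite t0 t1; apply.
rewrite /Fobj psi_convex //.
have := psi_ge0 (x - y) n0.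
have : 0 <= t * (1 - t) by rewrite mulr_ge0 // subr_ge0.
move=> h1 h2.
have : 0 <= lam * (t * (1 - t) * psi (x - y)) by apply: mulr_ge0; [exact: ltW | apply: mulr_ge0].
lra.
Qed.

Lemma h_le n d (mu lam : R) (w : 'M[R]_(n, d)) : (0 < n)%N -> 0 < lam ->
  hfun mu lam w <= Lh n mu lam / 2 * sqnorm w.
Proof.
move=> n0 l0; rewrite /hfun /Lh.
have := psi_le w n0.
have n0' : 0 < n%:R :> R by rewrite ltr0n.
move=> H; have : lam * psi w <= lam * ((2 * n%:R)^-1 * sqnorm w) by rewrite ler_wpM2l // ltW.
move=> H2.
have -> : (lam + mu) / n%:R / 2 * sqnorm w = lam * ((2 * n%:R)^-1 * sqnorm w) + mu / (2 * n%:R) * sqnorm w.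
  by field; rewrite gt_eqF.
by rewrite lerD2r.
Qed.

Lemma h_ge n d (mu lam : R) (w : 'M[R]_(n, d)) : (0 < n)%N -> 0 < lam ->
  mu / (2 * n%:R) * sqnorm w <= hfun mu lam w.
Proof.
move=> n0 l0; rewrite /hfun lerDr; apply: mulr_ge0; [exact: ltW | exact: psi_ge0].
Qed.

Definition nextpt n d (f : 'I_n -> 'rV[R]_d -> R) (mu lam : R) (x : 'M[R]_(n, d)) :=
  prox (Lh n mu lam)^-1 (phifun f mu) (x - (Lh n mu lam)^-1 *: Gm mu lam x).

Lemma descent n d (f : 'I_n -> 'rV[R]_d -> R) (mu lam : R) (x xs : 'M[R]_(n, d)) :
  (0 < n)%N -> 0 < mu -> 0 < lam ->
  (forall i, strongly_convex mu (f i)) ->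
  (forall i z, differentiable (f i : 'rV[R]_d -> R^o) z) ->
  Fobj f lam (nextpt f mu lam x) - Fobj f lam xs
    <= (1 - mu / (lam + mu)) * (Fobj f lam x - Fobj f lam xs).
Proof.
move=> n0 m0 l0 sc df.
have [Hmin _] := step x n0 m0 l0 sc df.
set L := Lh n mu lam.
have n0' : 0 < n%:R :> R by rewrite ltr0n.
have L0 : 0 < L by rewrite /L /Lh divr_gt0 // addr_gt0.
set v := x - L^-1 *: Gm mu lam x.
set p := nextpt f mu lam x.
have Q : forall z, phifun f mu z + (2 * L^-1)^-1 * sqnorm (z - v)
   = Fobj f lam z - hfun mu lam (z - x) + L / 2 * sqnorm (z - x)
     - hfun mu lam x + L / 2 * L^-2 * sqnorm (Gm mu lam x).
  move=> z.
  have E : z - v = (z - x) + L^-1 *: Gm mu lam x.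
    rewrite /v; move: (L^-1 *: Gm mu lam x) => g.
    by apply/matrixP => a b; rewrite !mxE; ring.
  have E2 : hfun mu lam z = hfun mu lam (x + (z - x)) by rewrite addrC subrK.
  rewrite E sqnormD sqnormZ mxinnerZr (Fobj_split _ mu) E2 hD // mxinnerC.
  by field; rewrite gt_eqF.
set t := mu / (lam + mu).
have t0 : 0 <= t <= 1.
  apply/andP; split; first by rewrite divr_ge0 // ltW // addr_gt0.
  by rewrite ler_pdivrMr ?addr_gt0 // mul1r lerDr ltW.
set z := t *: xs + (1 - t) *: x.
have Hz := Hmin z; rewrite -/p !Q in Hz.
have zx : z - x = t *: (xs - x).
  by rewrite /z; apply/matrixP => a b; rewrite !mxE; ring.
rewrite zx hZ sqnormZ in Hz.
have Fz := F_sc xs x n0 l0 sc t0.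
have hp := h_le mu (p - x) n0 l0 (lam := lam).
have hs := h_ge mu (xs - x) n0 l0 (lam := lam).
have S0 := sqnorm_ge0 (xs - x).
have key : L / 2 * (t ^+ 2 * sqnorm (xs - x)) - t ^+ 2 * (mu / (2 * n%:R) * sqnorm (xs - x))
     - mu / (2 * n%:R) * t * (1 - t) * sqnorm (xs - x) = 0.
  have lm : lam + mu != 0 by rewrite gt_eqF // addr_gt0.
  have nn : n%:R != 0 :> R by rewrite gt_eqF.
  rewrite /L /Lh /t; field.
  by rewrite ?lm ?nn.
have : t ^+ 2 * (mu / (2 * n%:R) * sqnorm (xs - x)) <= t ^+ 2 * hfun mu lam (xs - x).
  by rewrite ler_wpM2l // sqr_ge0.
move: Fz Hz hp key; rewrite -/z -/L.
nra.
Qed.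

End Rate.

Theorem mainTheorem3 (R : realType) :
  (forall (n d : nat) (f : 'I_n -> 'rV[R]_d -> R) (mu lam : R)
          (gradh : 'M[R]_(n, d) -> 'M[R]_(n, d)) (x0 : 'M[R]_(n, d)),
     standing_assumptions f mu lam gradh ->
     forall (k : nat) (i : 'I_n),
       row i (pg_iter f mu lam gradh x0 k.+1)
       = prox lam^-1 (f i) (xbar (pg_iter f mu lam gradh x0 k)))
  /\
  (exists c : R, 0 < c /\
   forall (n d : nat) (f : 'I_n -> 'rV[R]_d -> R) (mu lam : R)
          (gradh : 'M[R]_(n, d) -> 'M[R]_(n, d)) (x0 xstar : 'M[R]_(n, d))
          (eps : R),
     standing_assumptions f mu lam gradh ->
     (forall y, Fobj f lam xstar <= Fobj f lam y) ->
     0 < eps ->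
     forall k : nat,
       c * (1 + lam / mu) * ln ((Fobj f lam x0 - Fobj f lam xstar) / eps)
         <= k%:R ->
       Fobj f lam (pg_iter f mu lam gradh x0 k) - Fobj f lam xstar <= eps).
Proof.
have iterS : forall (n d : nat) (f : 'I_n -> 'rV[R]_d -> R) (mu lam : R)
          (gradh : 'M[R]_(n, d) -> 'M[R]_(n, d)) (x0 : 'M[R]_(n, d)),
     standing_assumptions f mu lam gradh -> forall k,
     pg_iter f mu lam gradh x0 k.+1 = nextpt f mu lam (pg_iter f mu lam gradh x0 k).
  move=> n d f mu lam gradh x0 [[n0 m0 l0 sc df] gr] k.
  by rewrite /= (grad_unique n0 (gr _)).
split.
  move=> n d f mu lam gradh x0 H k i.
  rewrite (iterS _ _ _ _ _ _ _ H).
  have [[n0 m0 l0 sc df] gr] := H.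
  by have [_ ->] := step (pg_iter f mu lam gradh x0 k) n0 m0 l0 sc df.
exists 1; split => //.
move=> n d f mu lam gradh x0 xs eps H Hmin eps0 k Hk.
have [[n0 m0 l0 sc df] gr] := H.
set D := Fobj f lam x0 - Fobj f lam xs.
set t := mu / (lam + mu).
have lm0 : 0 < lam + mu by rewrite addr_gt0.
have t0 : 0 < t by rewrite divr_gt0.
have q0 : 0 <= 1 - t.
  by rewrite subr_ge0 /t ler_pdivrMr // mul1r lerDr ltW.
have It : forall j, Fobj f lam (pg_iter f mu lam gradh x0 j) - Fobj f lam xs <= (1 - t) ^+ j * D.
  elim=> [|j IH]; first by rewrite expr0 mul1r.
  rewrite (iterS _ _ _ _ _ _ _ H).
  apply: le_trans (descent _ xs n0 m0 l0 sc df) _.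
  by rewrite exprS -mulrA ler_wpM2l.
have D0 : 0 <= D by rewrite subr_ge0 Hmin.
have qk0 : 0 <= (1 - t) ^+ k by rewrite exprn_ge0.
have qk1 : (1 - t) ^+ k <= 1 by rewrite exprn_ile1 // lerBlDr lerDl ltW.
apply: le_trans (It k) _.
have [HD|HD] := leP D eps.
  by apply: le_trans HD; rewrite ler_piMl.
have Dp : 0 < D by apply: lt_trans HD.
have qe : 1 - t <= expR (- t) by have := expR_ge1Dx (- t).
have qk : (1 - t) ^+ k <= expR (- t) ^+ k.
  by apply: lerXn2r; rewrite ?nnegrE ?expR_ge0.
rewrite -expRM_natl in qk.
have kt : ln (D / eps) <= k%:R * t.
  have E : 1 * (1 + lam / mu) * t = 1 by rewrite /t; field; rewrite ?gt_eqF.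
  have := ler_wpM2r (ltW t0) Hk; rewrite mulrAC E mul1r.
  by [].
have : expR (k%:R * - t) <= expR (- ln (D / eps)).
  by rewrite ler_expR mulrN lerN2.
rewrite expRN lnK; last by rewrite posrE divr_gt0.
rewrite invf_div => He.
have : (1 - t) ^+ k <= eps / D by apply: le_trans qk He.
by rewrite ler_pdivlMr // mulrC.
Qed.
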